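(* Let $T\ge1$ and $0<\eta\le\frac{1}{5\sqrt T}$, suppose $d:=\max\{25\eta^2T^2,1\}$ is a positive integer, let $f(w)=\max\{0,\max_{i\in[d]}(\frac{1}{\sqrt d}-w[i]-\frac{\eta i}{4d})\}$, let $\delta=\frac{\eta}{16d}$, and let $\tilde f(w)=\mathbb E_{v}[f(w+\delta v)]$ with $v$ uniform on the closed unit ball of $\mathbb R^d$. Let $(w_t)$ and $(\tilde w_t)$ be the iterates of unprojected GD with step size $\eta$ started at $w_1=\tilde w_1=0$ on $f$ and on $\tilde f$ respectively. Then $w_t=\tilde w_t$ for all $t\in[T]$.
   Context: $w[i]$ denotes the $i$-th coordinate of $w$. *)

(* Defs.v *)
From HB Require Import structures.
From mathcomp Require Import all_boot all_order all_algebra.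
From mathcomp Require Import all_classical all_reals all_analysis.
Unset Printing Implicit Defensive.
Import Order.TTheory GRing.Theory Num.Theory.
Import numFieldNormedType.Exports.
Local Open Scope classical_set_scope.
Local Open Scope ring_scope.

Section Defs.
Variable R : realType.

(* i-th standard basis vector of R^d (i : 'I_d, 0-based) *)
Definition basis_vec (d : nat) (i : 'I_d) : 'rV[R]_d := delta_mx 0 i.

Definition grad (d : nat) (g : 'rV[R]_d -> R) (x : 'rV[R]_d) : 'rV[R]_d :=
  \row_(i < d) derive g x (basis_vec d i).

(* unprojected gradient descent with step size eta started at 0:
   gd g eta n = w_{n+1}  (so w_1 = gd g eta 0 = 0). *)
Fixpoint gd (d : nat) (g : 'rV[R]_d -> R) (eta : R) (n : nat) : 'rV[R]_d :=
  match n with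
  | 0 => 0
  | n'.+1 => gd d g eta n' - eta *: grad d g (gd d g eta n')
  end.

Definition unit_ball (d : nat) : set 'rV[R]_d :=
  [set v | \sum_(i < d) (v 0 i) ^+ 2 <= 1].

(* Iterated Lebesgue integral over R^n of h : (nat -> R) -> R, integrating
   coordinates 0, ..., n-1 (x supplies the remaining coordinates). *)
Fixpoint iter_int (n : nat) (h : (nat -> R) -> R) (x : nat -> R) : R :=
  match n with
  | 0 => h x
  | n'.+1 => Rintegral lebesgue_measure setT
               (fun y : R => iter_int n' h (fun k => if k == n' then y else x k))
  end.

Definition int_Rd (d : nat) (F : 'rV[R]_d -> R) : R :=
  iter_int d (fun x => F (\row_(i < d) x (nat_of_ord i))) (fun _ => 0).

Definition unif_ball_expect (d : nat) (F : 'rV[R]_d -> R) : R :=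
  int_Rd d (fun v => (v \in unit_ball d)%:R * F v) / int_Rd d (fun v => (v \in unit_ball d)%:R).

(* f(w) = max{0, max_{i in [d]} (1/sqrt d - w[i] - eta i/(4d))}, i = 1..d *)
Definition hard_f (d : nat) (eta : R) (w : 'rV[R]_d) : R :=
  \big[Num.max/0]_(i < d)
     (1 / Num.sqrt (d%:R) - w 0 i - eta * (i.+1)%:R / (4 * d%:R)).

Definition smoothed (d : nat) (f : 'rV[R]_d -> R) (delta : R) (w : 'rV[R]_d) : R :=
  unif_ball_expect d (fun v => f (w + delta *: v)).

End Defs.

(* Main.v *)
Require Import Defs.
From HB Require Import structures.
From mathcomp Require Import all_boot all_order all_algebra.
From mathcomp Require Import all_classical all_reals all_analysis.
From mathcomp Require Import measurable_realfun.
From mathcomp Require Import ring lra.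
Import Order.TTheory GRing.Theory Num.Theory.
Import numFieldNormedType.Exports.
Local Open Scope classical_set_scope.
Local Open Scope ring_scope.
Set Implicit Arguments. Unset Strict Implicit.
Section Iter.
Variable R : realType.
Variable D : nat.
Notation mu := (@lebesgue_measure R).

Definition fill (x : nat -> R) (u : D.-tuple R) : nat -> R := fun k => nth (x k) u k.
Definition tame (G : (nat -> R) -> R) :=
  forall x, measurable_fun setT (fun u : D.-tuple R => G (fill x u)).
Definition upd (x : nat -> R) n y := fun k => if k == n then y else x k.
Definition set_tuple (u : D.-tuple R) n y : D.-tuple R :=
  [tuple (if (i : nat) == n then y else tnth u i) | i < D].

Lemma fill_upd x u n y : (n < D)%N -> upd (fill x u) n y = fill x (set_tuple u n y).
Proof.
move=> nD; apply/funext => k; rewrite /upd /fill.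
have [kD|kD] := ltnP k D.
  have -> : k = nat_of_ord (Ordinal kD) by [].
  rewrite (nth_map (Ordinal kD)) ?size_enum_ord //.
  rewrite nth_ord_enum /=; case: eqP => // _.
  by rewrite (tnth_nth (x k)).
case: eqP => [kn|_]; first by move: nD; rewrite -kn ltnNge kD.
by rewrite !nth_default // size_tuple.
Qed.

Lemma fill_tuple x : fill x [tuple x (nat_of_ord i) | i < D] = x.
Proof.
apply/funext => k; rewrite /fill.
have [kD|kD] := ltnP k D.
  have -> : k = nat_of_ord (Ordinal kD) by [].
  by rewrite (nth_map (Ordinal kD)) ?size_enum_ord // nth_ord_enum.
by rewrite nth_default // size_tuple.
Qed.

Lemma measurable_set_tuple n :
  measurable_fun setT (fun p : D.-tuple R * R => set_tuple p.1 n p.2).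
Proof.
apply/(@measurable_fun_tnthP _ _ _ R D) => i /=.
rewrite /comp /set_tuple.
under eq_fun do rewrite tnth_mktuple.
case: eqP => _; first exact: measurable_snd.
apply: (measurableT_comp (f := fun u : D.-tuple R => tnth u i)) => //.
exact: measurable_tnth.
Qed.

Lemma tame_upd G x n : tame G -> (n < D)%N ->
  measurable_fun setT (fun y : R => G (upd x n y)).
Proof.
move=> tG nD.
set u0 := [tuple x (nat_of_ord i) | i < D].
have -> : (fun y => G (upd x n y)) =
   (fun u => G (fill x u)) \o (fun p : D.-tuple R * R => set_tuple p.1 n p.2) \o (fun y => (u0, y)).
  by apply/funext => y /=; rewrite -fill_upd // fill_tuple.
apply: (measurableT_comp (f := fun u => G (fill x u))); first exact: tG.
apply: (measurableT_comp (f := fun p : D.-tuple R * R => set_tuple p.1 n p.2)).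
  exact: measurable_set_tuple.
by apply: measurable_fun_pair => //; exact: measurable_cst.
Qed.

Definition bnd (G : (nat -> R) -> R) M := forall x, 0 <= G x <= M.
Definition supp n (G : (nat -> R) -> R) :=
  forall x k, (n <= k < D)%N -> 1 < `|x k| -> G x = 0.

Lemma Rint_indic (a b c : R) : a <= b ->
  Rintegral mu setT (fun y => c * \1_`[a, b] y) = c * (b - a).
Proof.
move=> ab.
rewrite RintegralZl //; last exact: (@integrable_indic_itv R a b true false).
congr (_ * _); rewrite /Rintegral integral_indic // setIT.
have := @lebesgue_measure_itv R `[a, b]%R; rewrite /= lte_fin.
case: (ltrP a b) => [_ -> //|ba ->].
have -> : b = a by apply/le_anti; rewrite ba ab.
by rewrite subrr.
Qed.

Lemma integrable_cst_indic (a b c : R) :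
  mu.-integrable setT (EFin \o (fun y => c * \1_`[a, b] y)).
Proof.
have -> : EFin \o (fun y => c * \1_`[a, b] y) =
  (fun y => c%:E * (EFin \o (\1_`[a, b] : R -> R)) y)%E.
  by apply/funext => y /=; rewrite EFinM.
apply: integrableZl => //; exact: (@integrable_indic_itv R a b true false).
Qed.

Lemma layer_integrable G M n x : tame G -> bnd G M -> supp n G -> (n < D)%N ->
  mu.-integrable setT (EFin \o (fun y => G (upd x n y))).
Proof.
move=> tG bG sG nD.
pose ind : R -> R := \1_`[-1, 1].
apply: (@le_integrable _ _ _ mu setT measurableT _ (fun y => (M%:E * (EFin \o ind) y)%E)).

- by apply/measurable_EFinP; exact: tame_upd.
- move=> y _; rewrite /comp /ind -EFinM !abse_EFin lee_fin.
  have [y1|y1] := leP `|y| 1.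
    rewrite indicE mem_set; last by rewrite /= in_itv /= -ler_norml.
    rewrite mulr1 ger0_norm; last by case/andP: (bG (upd x n y)).
    rewrite ger0_norm; first by case/andP: (bG (upd x n y)).
    by case/andP: (bG (upd x n y)) => h1 h2; apply: le_trans h2.
  rewrite (sG _ n); first by rewrite normr0.
    by rewrite leqnn nD.
  by rewrite /upd eqxx.
- apply: integrableZl => //; exact: (@integrable_indic_itv R (-1) 1 true false).
Qed.

Definition layer n (G : (nat -> R) -> R) :=
  fun x => Rintegral mu setT (fun y => G (upd x n y)).

Lemma layer_tame G M n : tame G -> bnd G M -> (n < D)%N -> tame (layer n G).
Proof.
move=> tG bG nD x; rewrite /layer.
have -> : (fun u => Rintegral mu setT (fun y => G (upd (fill x u) n y))) =
  fine \o (fubini_F mu (fun p : D.-tuple R * R => (G (fill x (set_tuple p.1 n p.2)))%:E)).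
  apply/funext => u /=; rewrite /fubini_F /Rintegral.
  by congr fine; apply: eq_integral => y _; rewrite fill_upd.
apply: measurableT_comp; first exact: fine_measurable.
apply: measurable_fun_fubini_tonelli_F.
  apply/measurable_EFinP.
  apply: (measurableT_comp (f := fun u => G (fill x u))); first exact: tG.
  exact: measurable_set_tuple.
by move=> p; rewrite lee_fin; case/andP: (bG (fill x (set_tuple p.1 n p.2))).
Qed.

Lemma layer_bnd G M n : tame G -> bnd G M -> supp n G -> (n < D)%N ->
  bnd (layer n G) (M * 2).
Proof.
move=> tG bG sG nD x; apply/andP; split.
  by apply: Rintegral_ge0 => y _; case/andP: (bG (upd x n y)).
have -> : M * 2 = M * (1 - (-1)) by rewrite opprK.
rewrite -Rint_indic; last by rewrite (@le_trans _ _ 0) // lerN10.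
apply: le_Rintegral => //.
- exact: layer_integrable bG sG nD.
- exact: integrable_cst_indic.
- move=> y _.
  have [y1|y1] := leP `|y| 1.
    rewrite indicE mem_set; last by rewrite /= in_itv /= -ler_norml.
    by rewrite mulr1; case/andP: (bG (upd x n y)).
  rewrite (sG _ n); last by rewrite /upd eqxx.
    have M0 : 0 <= M by case/andP: (bG x) => h1 h2; apply: le_trans h2.
    by rewrite mulr_ge0.
  by rewrite leqnn nD.
Qed.

Lemma layer_supp G n : supp n G -> supp n.+1 (layer n G).
Proof.
move=> sG x k /andP[nk kD] xk; rewrite /layer.
have -> : (fun y => G (upd x n y)) = fun=> 0; last by rewrite Rintegral_cst // mul0r.
apply/funext => y; apply: (sG _ k); first by rewrite (ltnW nk) kD.
by rewrite /upd; case: eqP => [kn|//]; move: nk; rewrite kn ltnn.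
Qed.

Definition good g M := tame g /\ bnd g M /\ supp 0 g.

Lemma iter_props g M n : good g M -> (n <= D)%N ->
  tame (iter_int R n g) /\ bnd (iter_int R n g) (M * 2 ^+ n) /\ supp n (iter_int R n g).
Proof.
case=> tg [bg sg]; elim: n => [|n IH] nD.
  by rewrite expr0 mulr1.
have [t1 [b1 s1]] := IH (ltnW nD).
have tl := layer_tame t1 b1 nD.
have bl := layer_bnd t1 b1 s1 nD.
have sl := layer_supp s1.
have -> : M * 2 ^+ n.+1 = M * 2 ^+ n * 2 by rewrite exprSr mulrA.
by [].
Qed.

Lemma iter_layer n g x : iter_int R n.+1 g x = layer n (iter_int R n g) x.
Proof. by []. Qed.

Lemma iter_add g1 g2 M1 M2 n : good g1 M1 -> good g2 M2 -> (n <= D)%N ->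
  forall x, iter_int R n (fun z => g1 z + g2 z) x = iter_int R n g1 x + iter_int R n g2 x.
Proof.
move=> G1 G2; elim: n => [//|n IH] nD x.
rewrite !iter_layer /layer.
have -> : (fun y => iter_int R n (fun z => g1 z + g2 z) (upd x n y)) =
  (fun y => iter_int R n g1 (upd x n y) + iter_int R n g2 (upd x n y)).
  by apply/funext => y; rewrite IH // ltnW.
have [t1 [b1 s1]] := iter_props G1 (ltnW nD).
have [t2 [b2 s2]] := iter_props G2 (ltnW nD).
rewrite RintegralD //.
  exact: layer_integrable t1 b1 s1 nD.
exact: layer_integrable t2 b2 s2 nD.
Qed.

Lemma iter_scale g M c n : good g M -> (n <= D)%N ->
  forall x, iter_int R n (fun z => c * g z) x = c * iter_int R n g x.
Proof.
move=> G; elim: n => [//|n IH] nD x.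
rewrite !iter_layer /layer.
have -> : (fun y => iter_int R n (fun z => c * g z) (upd x n y)) =
  (fun y => c * iter_int R n g (upd x n y)).
  by apply/funext => y; rewrite IH // ltnW.
have [t1 [b1 s1]] := iter_props G (ltnW nD).
rewrite RintegralZl //; exact: layer_integrable t1 b1 s1 nD.
Qed.

Lemma iter_le g1 g2 M1 M2 n : good g1 M1 -> good g2 M2 -> (n <= D)%N ->
  (forall z, g1 z <= g2 z) ->
  forall x, iter_int R n g1 x <= iter_int R n g2 x.
Proof.
move=> G1 G2; elim: n => [//|n IH] nD le12 x.
rewrite !iter_layer /layer.
have [t1 [b1 s1]] := iter_props G1 (ltnW nD).
have [t2 [b2 s2]] := iter_props G2 (ltnW nD).
apply: le_Rintegral => //.
- exact: layer_integrable t1 b1 s1 nD.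
- exact: layer_integrable t2 b2 s2 nD.
- by move=> y _; apply: IH => //; exact: ltnW.
Qed.

Lemma meas_coord x k : measurable_fun setT (fun u : D.-tuple R => fill x u k).
Proof.
rewrite /fill; have [kD|kD] := ltnP k D.
  have -> : (fun u : D.-tuple R => nth (x k) u k) = (fun u => tnth u (Ordinal kD)).
    by apply/funext => u; rewrite (tnth_nth (x k)).
  exact: measurable_tnth.
have -> : (fun u : D.-tuple R => nth (x k) u k) = fun=> x k.
  by apply/funext => u; rewrite nth_default // size_tuple.
exact: measurable_cst.
Qed.

Lemma meas_sum (I : Type) (s : seq I) (F : I -> D.-tuple R -> R) :
  (forall i, measurable_fun setT (F i)) ->
  measurable_fun setT (fun u => \sum_(i <- s) F i u).
Proof.
move=> mF; elim: s => [|i s IH].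
  under eq_fun do rewrite big_nil; exact: measurable_cst.
under eq_fun do rewrite big_cons; exact: measurable_funD.
Qed.

Lemma meas_prod (I : Type) (s : seq I) (F : I -> D.-tuple R -> R) :
  (forall i, measurable_fun setT (F i)) ->
  measurable_fun setT (fun u => \prod_(i <- s) F i u).
Proof.
move=> mF; elim: s => [|i s IH].
  under eq_fun do rewrite big_nil; exact: measurable_cst.
under eq_fun do rewrite big_cons; exact: measurable_funM.
Qed.

Lemma meas_le (f : D.-tuple R -> R) (c : R) : measurable_fun setT f ->
  measurable_fun setT (fun u => ((f u <= c)%R%:R : R)).
Proof.
move=> mf.
have -> : (fun u => ((f u <= c)%R%:R : R)) = \1_[set u | f u <= c].
  apply/funext => u; rewrite indicE.
  case: (boolP (f u <= c)%R) => h.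
    by rewrite mem_set.
  rewrite memNset //=; exact/negP.
apply: measurable_indic; rewrite -[X in measurable X]setTI.
by apply: measurable_fun_le => //; exact: measurable_cst.
Qed.

Definition Pb (a b : R) (m : nat) (x : nat -> R) : R :=
  ((\sum_(k < D) x k ^+ 2 <= 1)%R%:R) * (a - b * x m).

Lemma ball_coord (x : nat -> R) m : (m < D)%N -> \sum_(k < D) x k ^+ 2 <= 1 -> `|x m| <= 1.
Proof.
move=> mD hs.
have : x m ^+ 2 <= 1.
  apply: le_trans hs.
  rewrite (bigD1 (Ordinal mD)) //= lerDl.
  by apply: sumr_ge0 => i _; exact: sqr_ge0.
by rewrite -real_normK ?num_real // expr_le1 // ?normr_ge0.
Qed.

Lemma good_Pb a b m : (m < D)%N -> `|b| <= a -> good (Pb a b m) (a + `|b|).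
Proof.
move=> mD ba; split; [|split].
- move=> x; rewrite /Pb; apply: measurable_funM.
    apply: meas_le; apply: meas_sum => k.
    by apply: measurable_funX; exact: meas_coord.
  apply: measurable_funB; first exact: measurable_cst.
  by apply: measurable_funM; [exact: measurable_cst | exact: meas_coord].
- move=> x; rewrite /Pb; case: (boolP (_ <= 1)) => hs; last first.
    rewrite mul0r lexx /=; apply: addr_ge0 => //.
    exact: le_trans ba.
  have xm := ball_coord mD hs.
  have hb : `|b * x m| <= `|b|.
    by rewrite normrM -{2}(mulr1 `|b|) ler_wpM2l.
  rewrite mul1r; apply/andP; split.
    rewrite subr_ge0; apply: le_trans ba; apply: le_trans hb; exact: ler_norm.
  rewrite lerD2l; apply: le_trans hb; rewrite -normrN; exact: ler_norm.
- move=> x k /andP[_ kD] xk; rewrite /Pb.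
  suff -> : (\sum_(k0 < D) x k0 ^+ 2 <= 1) = false by rewrite mul0r.
  apply/negbTE; rewrite -ltNge.
  apply: (@lt_le_trans _ _ (x k ^+ 2)).
    by rewrite -real_normK ?num_real // expr_gt1 // ?normr_ge0.
  rewrite (bigD1 (Ordinal kD)) //= lerDl.
  by apply: sumr_ge0 => i _; exact: sqr_ge0.
Qed.

Definition Qc (r : R) (x : nat -> R) : R := \prod_(k < D) ((`|x k| <= r)%R%:R).

Lemma good_Qc r : 0 <= r <= 1 -> good (Qc r) 1.
Proof.
case/andP=> r0 r1; split; [|split].
- move=> x; rewrite /Qc; apply: meas_prod => k.
  apply: meas_le.
  exact: (measurableT_comp (@normr_measurable R setT) (meas_coord x k)).
- move=> x; rewrite /Qc; apply/andP; split.
    by apply: prodr_ge0 => i _; exact: ler0n.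
  apply: prodr_ile1 => i _; apply/andP; split; first exact: ler0n.
  by case: (`|x i| <= r); [exact: lexx | exact: ler01].
- move=> x k /andP[_ kD] xk; rewrite /Qc (bigD1 (Ordinal kD)) //=.
  suff -> : (`|x k| <= r) = false by rewrite mul0r.
  by apply/negbTE; rewrite -ltNge; exact: le_lt_trans xk.
Qed.

Lemma indic_ball (r y : R) : ((`|y| <= r)%R%:R : R) = \1_`[- r, r] y.
Proof.
rewrite indicE; case: (boolP (`|y| <= r)) => h.
  by rewrite mem_set //= in_itv /= -ler_norml.
by rewrite memNset //= in_itv /= -ler_norml; exact/negP.
Qed.

Lemma iter_Qc r n : 0 <= r -> (n <= D)%N -> forall x,
  iter_int R n (Qc r) x = (2 * r) ^+ n * \prod_(n <= k < D) ((`|x k| <= r)%R%:R).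
Proof.
move=> r0; elim: n => [|n IH] nD x.
  by rewrite expr0 mul1r big_mkord; change (Qc r x = Qc r x).
rewrite iter_layer /layer.
have -> : (fun y => iter_int R n (Qc r) (upd x n y)) =
  (fun y => ((2 * r) ^+ n * \prod_(n.+1 <= k < D) ((`|x k| <= r)%R%:R)) * \1_`[- r, r] y).
  apply/funext => y; rewrite IH; last exact: ltnW.
  rewrite big_ltn // /upd eqxx indic_ball.
  rewrite (mulrC (\1_`[- r, r] y)) mulrA; congr (_ * _ * _).
  apply: eq_big_nat => k /andP[nk _].
  by case: eqP => // kn; move: nk; rewrite kn ltnn.
rewrite Rint_indic; last by rewrite (@le_trans _ _ 0) // oppr_le0.
by rewrite opprK exprSr -(mulr2n r) -mulr_natl; ring.
Qed.

Lemma Z_pos m x : (m < D)%N -> 0 < iter_int R D (Pb 1 0 m) x.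
Proof.
move=> mD.
set r : R := (D%:R + 1)^-1.
have r0 : 0 < r by rewrite invr_gt0 ltr_wpDl.
have r1 : r <= 1 by rewrite invf_le1 // ?lerDr // ltr_wpDl.
have Dr : D%:R * r = 1 - r.
  by rewrite /r; field; rewrite lt0r_neq0 // ltr_wpDl.
have Gq := good_Qc (r := r); rewrite (ltW r0) r1 /= in Gq.
have Gp := good_Pb (a := 1) (b := 0) mD; rewrite normr0 ler01 in Gp.
have Gp' := Gp isT.
apply: (@lt_le_trans _ _ (iter_int R D (Qc r) x)); last first.
  apply: (iter_le (Gq isT) Gp') => // z.
  rewrite /Pb mul0r subr0 mulr1.
  case: (boolP [forall k : 'I_D, `|z k| <= r]) => hall.
    have -> : (\sum_(k < D) z k ^+ 2 <= 1) = true.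
      apply: (@le_trans _ _ (\sum_(k < D) r ^+ 2)).
        apply: ler_sum => k _; rewrite -real_normK ?num_real //.
        by rewrite lerXn2r // ?nnegrE ?normr_ge0 ?(ltW r0) //; exact: (forallP hall).
      rewrite sumr_const card_ord -mulr_natl expr2 mulrA Dr.
      rewrite mulrBl mul1r lerBlDr; apply: (le_trans r1).
      by rewrite lerDl mulr_ge0 // ltW.
    by have [_ [/(_ z) /andP[_ ->] _]] := Gq isT.
  move: hall; rewrite negb_forall => /existsP[k hk].
  rewrite /Qc (bigD1 k) //= (negbTE hk) mul0r.
  exact: ler0n.
rewrite iter_Qc ?leqnn ?(ltW r0) // big_geq // mulr1.
by apply: exprn_gt0; rewrite mulr_gt0.
Qed.

Lemma Pb_shift a a' b m x : (m < D)%N -> `|b| <= a' -> a' <= a ->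
  iter_int R D (Pb a b m) x =
  iter_int R D (Pb a' b m) x + (a - a') * iter_int R D (Pb 1 0 m) x.
Proof.
move=> mD ba aa.
have G1 := good_Pb mD ba.
have G2 : good (Pb (a - a') 0 m) (a - a' + `|0 : R|).
  by apply: good_Pb => //; rewrite normr0 subr_ge0.
have G3 : good (Pb 1 0 m) (1 + `|0 : R|) by apply: good_Pb => //; rewrite normr0.
have -> : Pb a b m = fun z => Pb a' b m z + Pb (a - a') 0 m z.
  by apply/funext => z; rewrite /Pb; ring.
rewrite (iter_add G1 G2) //.
have -> : Pb (a - a') 0 m = fun z => (a - a') * Pb 1 0 m z.
  by apply/funext => z; rewrite /Pb; ring.
by rewrite (iter_scale _ G3).
Qed.
End Iter.
Section Deriv.
Variables (R : realType) (d : nat).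

Lemma derive_affine (g : 'rV[R]_d -> R) a v c eps : 0 < eps ->
  (forall h, `|h| < eps -> g (a + h *: v) = g a + h * c) -> derive g a v = c.
Proof.
move=> e0 hg; rewrite /derive; apply: norm_lim_near_cst.
near=> h.
have h0 : h != 0 by near: h; exact: nbhs_dnbhs_neq.
have he : `|h| < eps by near: h; exact: dnbhs0_lt.
rewrite /comp /shift /= (addrC (h *: v) a) hg // addrC addKr.
by change (h^-1 * (h * c) = c); rewrite mulrA mulVf // mul1r.
Unshelve. all: by end_near.
Qed.


Lemma grad_affine (g : 'rV[R]_d -> R) a (m : 'I_d) eps : 0 < eps ->
  (forall j h, `|h| < eps -> g (a + h *: basis_vec R d j) = g a - h * (j == m)%:R) ->
  grad R d g a = - basis_vec R d m.
Proof.
move=> e0 H; apply/rowP => j; rewrite !mxE.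
rewrite (@derive_affine g a _ (- (j == m)%:R) eps e0) ?eqxx //.
by move=> h hh; rewrite H // mulrN.
Qed.
End Deriv.

Section HardF.
Variables (R : realType) (d : nat) (e : R).
Hypothesis d0 : (0 < d)%N.
Hypothesis e0 : 0 < e.

Definition Wv (s : nat) : 'rV[R]_d :=
  \row_(i < d) ((s %/ d)%:R * e + (i < s %% d)%N%:R * e).
Definition tf (i : 'I_d) (z : 'rV[R]_d) : R :=
  1 / Num.sqrt (d%:R) - z 0 i - e * (i.+1)%:R / (4 * d%:R).
Definition mo (s : nat) : 'I_d := Ordinal (ltn_pmod s d0).

Lemma hard_fE z : hard_f R d e z = \big[Num.max/0]_(i < d) tf i z.
Proof. by []. Qed.

Lemma tf_gap s (i : 'I_d) : i != mo s ->
  tf i (Wv s) <= tf (mo s) (Wv s) - e / (4 * d%:R).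
Proof.
move=> ne; rewrite /tf !mxE /= ltnn mul0r addr0.
set u := e / (4 * d%:R).
have dR : 1 <= (d%:R : R) by rewrite ler1n.
have u0 : 0 < u by rewrite divr_gt0 // mulr_gt0 // (lt_le_trans ltr01 dR).
have eu : e = 4 * d%:R * u.
  by rewrite /u mulrC divfK // mulf_neq0 // lt0r_neq0 // (lt_le_trans ltr01 dR).
have Ei : e * (i.+1)%:R / (4 * d%:R) = (i.+1)%:R * u by rewrite /u mulrAC mulrC mulrA.
have Em : e * (s %% d).+1%:R / (4 * d%:R) = (s %% d).+1%:R * u by rewrite /u mulrAC mulrC mulrA.
rewrite Ei Em.
have h1 : ((s %% d).+1%:R : R) <= d%:R by rewrite ler_nat ltn_pmod.
have h2 : (0 : R) <= (i.+1)%:R by exact: ler0n.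
set A := 1 / _; set K := (s %/ d)%:R.
set M := ((s %% d).+1%:R : R) in h1 *; set I := ((i.+1)%:R : R) in h2 *.
set Dr := (d%:R : R) in dR eu h1 *.
have [im|mi] := ltnP i (s %% d).
  rewrite mul1r.
  have : 0 <= u * (3 * Dr - 1 + I) by rewrite mulr_ge0 // ?(ltW u0) //; lra.
  rewrite eu; nra.
have mi' : (s %% d < i)%N.
  rewrite ltn_neqAle mi andbT; apply/eqP => h; move/eqP: ne; apply.
  by apply: val_inj; rewrite /= h.
rewrite mul0r addr0.
have h3 : M + 1 <= I by rewrite /M /I natr1 ler_nat.
nra.
Qed.

Lemma loclin s (z : 'rV[R]_d) (rho : R) : 0 <= rho -> rho <= e / (8 * d%:R) ->
  e / (8 * d%:R) < tf (mo s) (Wv s) ->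
  (forall i, `|z 0 i - Wv s 0 i| <= rho) ->
  hard_f R d e z = tf (mo s) (Wv s) - (z 0 (mo s) - Wv s 0 (mo s)).
Proof.
move=> r0 r8 hV hz.
have tfz i : tf i z = tf i (Wv s) - (z 0 i - Wv s 0 i) by rewrite /tf; ring.
have dR : 0 < (d%:R : R) by rewrite ltr0n.
have e84 : e / (8 * d%:R) * 2 = e / (4 * d%:R).
  by field; rewrite lt0r_neq0.
have lo i : - rho <= z 0 i - Wv s 0 i.
  by rewrite lerNl; apply: (le_trans _ (hz i)); rewrite -normrN; exact: ler_norm.
have hi i : z 0 i - Wv s 0 i <= rho.
  by apply: (le_trans _ (hz i)); exact: ler_norm.
rewrite hard_fE -tfz.
apply/le_anti/andP; split; last exact: le_bigmax.
apply: bigmax_le => [|i _].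
  rewrite tfz subr_ge0; apply: (le_trans (hi (mo s))); apply: (le_trans r8).
  exact: ltW.
have [->|ne] := eqVneq i (mo s); first exact: lexx.
have := tf_gap ne; rewrite !tfz -e84 => hg.
have h1 := lo i; have h2 := hi (mo s).
set a := tf i (Wv s) in hg *; set b := tf (mo s) (Wv s) in hg *.
set c := e / (8 * d%:R) in hg r8 *.
set x1 := z 0 i - Wv s 0 i in h1 *; set x2 := z 0 (mo s) - Wv s 0 (mo s) in h2 *.
lra.
Qed.

Lemma shiftE s j (h : R) i :
  (Wv s + h *: basis_vec R d j) 0 i - Wv s 0 i = h * (i == j)%:R.
Proof. by rewrite !mxE eqxx /= addrC addKr. Qed.

Lemma eps_pos : 0 < e / (16 * d%:R).
Proof. by rewrite divr_gt0 // mulr_gt0 // ltr0n. Qed.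

Lemma eps_le : e / (16 * d%:R) <= e / (8 * d%:R).
Proof.
have dR : 0 < (d%:R : R) by rewrite ltr0n.
rewrite ler_pdivrMr ?mulr_gt0 // mulrAC ler_pdivlMr ?mulr_gt0 //.
by rewrite ler_pM2l // ler_pM2r // ler_nat.
Qed.

Lemma f_shift s j h : e / (8 * d%:R) < tf (mo s) (Wv s) ->
  `|h| < e / (16 * d%:R) ->
  hard_f R d e (Wv s + h *: basis_vec R d j) = hard_f R d e (Wv s) - h * (j == mo s)%:R.
Proof.
move=> hV hh.
rewrite (@loclin s (Wv s) 0) //; last by move=> i; rewrite subrr normr0.
rewrite (@loclin s _ `|h|) //.
- by rewrite shiftE subrr subr0 eq_sym.
- apply: (le_trans (ltW hh)); exact: eps_le.
- move=> i; rewrite shiftE normrM; case: (i == j).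
    by rewrite normr1 mulr1.
  by rewrite normr0 mulr0.
by rewrite divr_ge0 ?mulr_ge0 // ltW.
Qed.

Lemma grad_f s : e / (8 * d%:R) < tf (mo s) (Wv s) ->
  grad R d (hard_f R d e) (Wv s) = - basis_vec R d (mo s).
Proof.
move=> hV; apply: (grad_affine eps_pos) => j h hh; exact: f_shift.
Qed.
End HardF.

Section Smooth.
Variables (R : realType) (d : nat) (e : R).
Hypothesis d0 : (0 < d)%N.
Hypothesis e0 : 0 < e.
Notation del := (e / (16 * d%:R)).
Notation f := (hard_f R d e).
Notation W := (Wv d e).
Notation m s := (mo d0 s).
Notation V s := (tf e (mo d0 s) (Wv d e s)).

Lemma ball_rowE (x : nat -> R) :
  ((\row_(i < d) x i) \in unit_ball R d) = (\sum_(k < d) x k ^+ 2 <= 1).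
Proof.
have E : \sum_(i < d) ((\row_(i < d) x i) 0 i) ^+ 2 = \sum_(k < d) x k ^+ 2.
  by apply: eq_bigr => i _; rewrite mxE.
apply/idP/idP => [/set_mem|h]; rewrite /unit_ball /=.
  by rewrite E.
by apply/mem_set; rewrite /= E.
Qed.

Lemma del8 : del + del = e / (8 * d%:R).
Proof. by field; rewrite lt0r_neq0 // ltr0n. Qed.

Lemma del_pos : 0 < del.
Proof. exact: eps_pos. Qed.

Lemma integrand_eq s j h : e / (8 * d%:R) < V s -> `|h| < del ->
  (fun x : nat -> R => ((\row_(i < d) x i) \in unit_ball R d)%:R *
      f (W s + h *: basis_vec R d j + del *: \row_(i < d) x i)) =
  Pb d (V s - h * (j == m s)%:R) del (m s).
Proof.
move=> hV hh; apply/funext => x; rewrite ball_rowE /Pb.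
case: (boolP (_ <= 1)) => hb; last by rewrite !mul0r.
rewrite !mul1r.
have dp := del_pos.
rewrite (@loclin R d e d0 e0 s _ (`|h| + del)) //.
- rewrite !mxE eqxx /= (eq_sym (m s)); ring.
- by rewrite addr_ge0 // ltW.
- by rewrite -del8 lerD2r ltW.
- move=> i; rewrite !mxE eqxx /= -addrA addrC addrK.
  apply: (le_trans (ler_normD _ _)); apply: lerD.
    rewrite normrM; case: (i == j); first by rewrite normr1 mulr1.
    by rewrite normr0 mulr0.
  rewrite normrM (ger0_norm (ltW dp)); apply: ler_piMr; first exact: ltW.
  exact: (ball_coord (ltn_ord i) hb).
Qed.

Lemma den_eq s :
  (fun x : nat -> R => ((\row_(i < d) x i) \in unit_ball R d)%:R) = Pb d 1 0 (m s).
Proof. by apply/funext => x; rewrite ball_rowE /Pb mul0r subr0 mulr1. Qed.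

Lemma smoothed_shift s j h : e / (8 * d%:R) < V s -> `|h| < del ->
  smoothed R d f del (W s + h *: basis_vec R d j) =
  smoothed R d f del (W s) - h * (j == m s)%:R.
Proof.
move=> hV hh.
have mD : (m s < d)%N := ltn_ord (m s).
have key h' : `|h'| < del -> smoothed R d f del (W s + h' *: basis_vec R d j) =
    iter_int R d (Pb d (V s - h' * (j == m s)%:R) del (m s)) (fun _ => 0) /
    iter_int R d (Pb d 1 0 (m s)) (fun _ => 0).
  move=> hh'; rewrite /smoothed /unif_ball_expect /int_Rd.
  by rewrite (integrand_eq j hV hh') (den_eq s).
have := key 0; rewrite normr0 del_pos scale0r addr0 mul0r subr0 => ->//.
rewrite key //.
set c := h * (j == m s)%:R.
have hc : `|c| <= `|h|.
  rewrite /c normrM; case: (j == m s); first by rewrite normr1 mulr1.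
  by rewrite normr0 mulr0.
have Z0 := @Z_pos R d (m s) (fun _ => 0) mD.
set Z := iter_int R d (Pb d 1 0 (m s)) (fun _ => 0) in Z0 *.
have dp := del_pos.
have Vd : del + del < V s by rewrite del8.
have ch := le_lt_trans hc hh.
have hc1 : - del < c by rewrite ltrNl; apply: le_lt_trans ch; rewrite -normrN ler_norm.
have hc2 : c < del by apply: le_lt_trans ch; exact: ler_norm.
have N : iter_int R d (Pb d (V s - c) del (m s)) (fun _ => 0) =
    iter_int R d (Pb d (V s) del (m s)) (fun _ => 0) - c * Z.
  have [c0|c0] := leP 0 c.
    rewrite (@Pb_shift R d (V s) (V s - c) del (m s)) //.
    - rewrite -/Z; ring.
    - rewrite ger0_norm ?ltW //; lra.
    - lra.
  rewrite (@Pb_shift R d (V s - c) (V s) del (m s)) //.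
  - rewrite -/Z; ring.
  - rewrite ger0_norm ?ltW //; lra.
  - lra.
rewrite N mulrBl -mulrA divff ?mulr1 //; exact: lt0r_neq0.
Qed.

Lemma grad_ftilde s : e / (8 * d%:R) < V s ->
  grad R d (smoothed R d f del) (W s) = - basis_vec R d (m s).
Proof.
move=> hV; apply: (grad_affine del_pos) => j h hh; exact: smoothed_shift.
Qed.
End Smooth.

Section Main.
Variable R : realType.

Lemma W_step d (d0 : (0 < d)%N) (e : R) s :
  Wv d e s.+1 = Wv d e s + e *: basis_vec R d (mo d0 s).
Proof.
apply/rowP => i; rewrite !mxE eqxx /=.
have -> : (i == mo d0 s) = (nat_of_ord i == (s %% d)%N) by [].
have ltm : (s %% d < d)%N := ltn_pmod s d0.
have key : forall b1 b2 : bool, (b1 = b2) -> (b1%:R : R) = b2%:R by move=> ? ? ->.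
rewrite divnS // modnS; case: ifP => hdv.
  have md : (s %% d).+1 = d.
    have h1 : (d %| (s %% d).+1)%N.
      move: hdv; rewrite {1}(divn_eq s d) -addnS dvdn_addr //.
      exact: dvdn_mull.
    apply/eqP; rewrite eqn_leq ltm /=; exact: dvdn_leq h1.
  rewrite add1n -natr1 ltn0 /= mul0r addr0.
  have hi : (i <= s %% d)%N by rewrite -ltnS md ltn_ord.
  rewrite leq_eqVlt in hi.
  case/orP: hi => [/eqP hi|hi].
    by rewrite hi ltnn eqxx /=; ring.
  by rewrite hi (ltn_eqF hi) /=; ring.
rewrite add0n ltnS leq_eqVlt.
case: (ltngtP i (s %% d)) => h /=.
- ring.
- ring.
- ring.
Qed.

Lemma sq_le (x y : R) : 0 <= x -> 0 <= y -> x ^+ 2 <= y ^+ 2 -> x <= y.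
Proof. move=> x0 y0 h; nra. Qed.

Lemma hV_bound d (d0 : (0 < d)%N) (e : R) (T s : nat) : 0 < e ->
  e * Num.sqrt d%:R <= 1 / 5 -> 5 * T%:R * e <= Num.sqrt d%:R -> (s.+1 < T)%N ->
  e / (8 * d%:R) < tf e (mo d0 s) (Wv d e s).
Proof.
move=> e0 er Ter sT.
rewrite /tf !mxE /= ltnn mul0r addr0.
have Dp : 0 < (d%:R : R) by rewrite ltr0n.
have D1 : 1 <= (d%:R : R) by rewrite ler1n.
set r := Num.sqrt (d%:R : R) in er Ter *.
have r0 : 0 < r by rewrite sqrtr_gt0.
have rD : r * r = d%:R by rewrite -expr2 sqr_sqrtr // ltW.
set u := 1 / r.
have u0 : 0 < u by rewrite divr_gt0.
have ru : r * u = 1 by rewrite /u mul1r divff // lt0r_neq0.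
have eu : e <= u / 5.
  have h : e * r * u <= 1 / 5 * u by rewrite ler_wpM2r // ltW.
  by move: h; rewrite -mulrA ru mulr1 mul1r mulrC.
have KD : ((s %/ d)%:R * d%:R : R) <= T%:R.
  rewrite -natrM ler_nat; apply: (leq_trans (leq_trunc_div s d)).
  exact: (leq_trans (leqnSn s) (ltnW sT)).
have K0 : (0 : R) <= (s %/ d)%:R by exact: ler0n.
set K := ((s %/ d)%:R : R) in KD K0 *.
set Dn := (d%:R : R) in Dp D1 rD KD *.
have b2 : K * e <= u / 5.
  have h1 : K * e * Dn <= T%:R * e by rewrite mulrAC ler_wpM2r // ltW.
  have h2 : T%:R * e <= Dn * u / 5.
    have Du : Dn * u = r by rewrite -rD -mulrA ru mulr1.
    rewrite Du; have := Ter; rewrite -mulrA => h; lra.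
  have h3 : K * e * Dn <= u / 5 * Dn by rewrite mulrC (mulrC (u / 5)) mulrA; lra.
  by rewrite -(ler_pM2r Dp).
have M0 : ((s %% d).+1%:R : R) <= Dn by rewrite ler_nat ltn_pmod.
set M := ((s %% d).+1%:R : R) in M0 *.
have b1 : e / (8 * Dn) <= e / 8.
  rewrite ler_pdivrMr ?mulr_gt0 //; nra.
have b3 : e * M / (4 * Dn) <= e / 4.
  rewrite ler_pdivrMr ?mulr_gt0 //; nra.
rewrite -/u; lra.
Qed.

Lemma W0 d (e : R) : Wv d e 0 = 0.
Proof. by apply/rowP => i; rewrite !mxE div0n mod0n ltn0 !mul0r addr0. Qed.

End Main.

Theorem mainTheorem14 (R : realType) (T : nat) (eta : R) (d : nat) :
  (1 <= T)%N ->
  0 < eta -> eta <= 1 / (5 * Num.sqrt (T%:R)) ->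
  (0 < d)%N -> d%:R = Num.max (25 * eta ^+ 2 * (T%:R) ^+ 2) 1 ->
  let f := hard_f R d eta in
  let delta := eta / (16 * d%:R) in
  let ftilde := smoothed R d f delta in
  forall t : nat, (1 <= t <= T)%N ->
    gd R d f eta t.-1 = gd R d ftilde eta t.-1.
Proof.
move=> T1 e0 eT d0 dmax f delta ftilde t /andP[t1 tT].
have Tp : (0 : R) < T%:R by rewrite ltr0n.
have T1R : (1 : R) <= T%:R by rewrite ler1n.
set q := Num.sqrt (T%:R : R) in eT.
have q0 : 0 < q by rewrite sqrtr_gt0.
have qT : q * q = T%:R by rewrite -expr2 sqr_sqrtr // ltW.
have eq5 : eta * q <= 1 / 5.
  have h : eta * (5 * q) <= 1.
    by rewrite -ler_pdivlMr ?mulr_gt0.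
  by rewrite ler_pdivlMr // -mulrA (mulrC q).
have e2T : eta ^+ 2 * T%:R <= 1 / 25.
  rewrite -qT expr2.
  have h : (eta * q) * (eta * q) <= 1 / 5 * (1 / 5).
    by apply: ler_pM => //; rewrite ?mulr_ge0 ?ltW.
  have -> : eta * eta * (q * q) = (eta * q) * (eta * q) by ring.
  apply: (le_trans h); lra.
have e2 : eta ^+ 2 <= 1 / 25.
  apply: le_trans e2T; rewrite -{1}(mulr1 (eta ^+ 2)) ler_wpM2l //.
  exact: sqr_ge0.
have Dle : 25 * eta ^+ 2 * T%:R ^+ 2 <= d%:R /\ eta ^+ 2 * d%:R <= 1 / 25.
  rewrite dmax maxEle; case: ifP => h; split => //.
  - by rewrite mulr1.
  - have : eta ^+ 2 * T%:R * (eta ^+ 2 * T%:R) <= 1 / 25 * (1 / 25).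
      by apply: ler_pM => //; rewrite mulr_ge0 ?sqr_ge0 ?ler0n.
    nra.
have Dp : (0 : R) <= d%:R by exact: ler0n.
set r := Num.sqrt (d%:R : R).
have r0 : 0 <= r by exact: sqrtr_ge0.
have rD : r ^+ 2 = d%:R by rewrite sqr_sqrtr.
have er : eta * r <= 1 / 5.
  apply: sq_le; [by rewrite mulr_ge0 // ltW | by [] |].
  rewrite exprMn rD; case: Dle => _ h; apply: (le_trans h); rewrite expr2; lra.
have Ter : 5 * T%:R * eta <= r.
  apply: sq_le; [by rewrite !mulr_ge0 // ltW | by [] |].
  rewrite rD; case: Dle => h _; apply: (le_trans _ h).
  by rewrite le_eqVlt; apply/orP; left; apply/eqP; ring.
have main : forall s, (s < T)%N -> gd R d f eta s = Wv d eta s /\ gd R d ftilde eta s = Wv d eta s.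
  elim=> [|s IH] sT; first by rewrite W0.
  have [IH1 IH2] := IH (ltnW sT).
  have hV := hV_bound d0 e0 er Ter sT.
  rewrite /= IH1 IH2 (W_step d0).
  rewrite /f grad_f // /ftilde /delta /f grad_ftilde //.
  by rewrite scalerN opprK.
have tT' : (t.-1 < T)%N by rewrite prednK.
by have [-> ->] := main _ tT'.
Qed.
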